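(* Let $R$ be an integral domain whose Jacobson radical is $\{0\}$, let $X=\operatorname{Specm}(R)$ and for $r\in R$ let $X_r=\{\mathfrak m\in X : r\notin\mathfrak m\}$. Then $\mathcal F=\{Z\subseteq X : X_r\subseteq Z \text{ for some } r\in R\setminus\{0\}\}$ is a filter on $X$. Moreover, if $\mathcal U$ is an ultrafilter on $X$ containing $\mathcal F$, then the canonical map $R\to\prod_{\mathcal U}R/\mathfrak m$ is injective, and the field $\prod_{\mathcal U}R/\mathfrak m$ contains (a copy of) the fraction field of $R$.
   Context: A filter on a set $X$ is a collection $\mathcal F$ of subsets of $X$ with $\emptyset\notin\mathcal F$, closed under finite intersections and under passing to supersets; an ultrafilter is a maximal filter. For a nonempty filter $\mathcal F$ on $X$ and commutative rings $S_i$ ($i\in X$), $\prod_{\mathcal F}S_i$ is the quotient of $\prod_{i\in X}S_i$ by the ideal of families $(s_i)$ with $\{i : s_i=0\}\in\mathcal F$; if all $S_i$ are fields and $\mathcal F$ is an ultrafilter this is a field. The canonical map $R\to\prod_{\mathcal U}R/\mathfrak m$ sends $r$ to the class of $(r \bmod \mathfrak m)_{\mathfrak m\in X}$. *)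

(* Defs.v *)
From HB Require Import structures.
From mathcomp Require Import all_boot all_order all_algebra.
Set Implicit Arguments. Unset Strict Implicit. Unset Printing Implicit Defensive.
Import Order.TTheory GRing.Theory Num.Theory.
Local Open Scope ring_scope.

Definition is_ideal (R : comPzRingType) (I : R -> Prop) : Prop :=
  [/\ I 0, (forall x y, I x -> I y -> I (x + y)) & (forall r x, I x -> I (r * x))].

Definition maximal_ideal (R : comPzRingType) (m : R -> Prop) : Prop :=
  [/\ is_ideal m, ~ m 1 &
      forall J : R -> Prop, is_ideal J -> ~ J 1 -> (forall x, m x -> J x) ->
        forall x, J x -> m x].

Definition Specm (R : comPzRingType) : Type := {m : R -> Prop | maximal_ideal m}.

Definition jacobson_trivial (R : comPzRingType) : Prop :=
  forall r : R, (forall m : Specm R, proj1_sig m r) -> r = 0.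

Definition Xr (R : comPzRingType) (r : R) : Specm R -> Prop :=
  fun m => ~ proj1_sig m r.

Definition is_filter (X : Type) (F : (X -> Prop) -> Prop) : Prop :=
  [/\ F (fun _ => True),
      ~ F (fun _ => False),
      (forall A B, F A -> F B -> F (fun x => A x /\ B x)) &
      (forall A B, F A -> (forall x, A x -> B x) -> F B)].

Definition is_ultrafilter (X : Type) (U : (X -> Prop) -> Prop) : Prop :=
  is_filter U /\
  forall G, is_filter G -> (forall A, U A -> G A) -> forall A, G A -> U A.

Definition Ffilter (R : comPzRingType) : (Specm R -> Prop) -> Prop :=
  fun Z => exists r : R, r <> 0 /\ (forall m, Xr r m -> Z m).

(* An element of prod_m R/m is represented by a
   family of representatives f : Specm R -> R (f m is a representative of the
   m-th component in R/m).  Two families define the same element of prod_U R/m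
   iff {m | f m - g m \in m} \in U, i.e. iff their difference lies in the ideal
   of families vanishing on a U-large set.  Ring operations are pointwise. *)
Definition uprod_eq (R : comPzRingType) (U : (Specm R -> Prop) -> Prop)
  (f g : Specm R -> R) : Prop :=
  U (fun m => proj1_sig m (f m - g m)).

Definition canon (R : comPzRingType) (r : R) : Specm R -> R := fun _ => r.

Definition uprod_embedding (R : comPzRingType) (U : (Specm R -> Prop) -> Prop)
  (K : nzRingType) (phi : K -> Specm R -> R) : Prop :=
  [/\ uprod_eq U (phi 1) (fun _ => 1),
      (forall a b, uprod_eq U (phi (a + b)) (fun m => phi a m + phi b m)),
      (forall a b, uprod_eq U (phi (a * b)) (fun m => phi a m * phi b m)) &
      (forall a b, uprod_eq U (phi a) (phi b) -> a = b)].

(* Main.v *)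
Require Import Defs.
From HB Require Import structures.
From mathcomp Require Import all_boot all_order all_algebra.
From mathcomp Require Import ring.
From Stdlib Require Import Classical ClassicalEpsilon.
Import GRing.Theory.
Local Open Scope ring_scope.

Section Helpers.
Variable R : idomainType.

Definition nf (x : {fraction R}) : R := (frac (repr x)).1.
Definition df (x : {fraction R}) : R := (frac (repr x)).2.

Lemma df_neq0 x : df x <> 0.
Proof. by apply/eqP; exact: denom_ratioP. Qed.

Lemma frac_nd (x : {fraction R}) :
  FracField.tofrac (nf x) = x * FracField.tofrac (df x).
Proof.
rewrite /nf /df -{2}(reprK x).
set r := repr x.
unlock FracField.tofrac.
rewrite -[RHS]FracField.pi_mul.
apply/eqmodP; rewrite /= FracField.equivfE /FracField.mulf /=.
rewrite !numden_Ratio ?oner_neq0 ?mulf_neq0 ?oner_neq0 ?denom_ratioP //.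
by apply/eqP; rewrite mulr1 mul1r mulrC.
Qed.

Lemma tofrac_inj (p q : R) : FracField.tofrac p = FracField.tofrac q -> p = q.
Proof. by move=> h; apply/eqP; rewrite -tofrac_eq h. Qed.

Variable m : Specm R.
Local Notation I := (proj1_sig m).

Lemma memI : is_ideal I.
Proof. by case: (proj2_sig m). Qed.

Lemma mem0 : I 0.
Proof. by case: memI. Qed.
Lemma memD x y : I x -> I y -> I (x + y).
Proof. by case: memI => _ h _; apply: h. Qed.
Lemma memM r x : I x -> I (r * x).
Proof. by case: memI => _ _ h; apply: h. Qed.
Lemma memMr x r : I x -> I (x * r).
Proof. by rewrite mulrC; apply: memM. Qed.
Lemma memN x : I x -> I (- x).
Proof. by move=> h; rewrite -mulN1r; apply: memM. Qed.

Lemma comb3 k1 k2 k3 t1 t2 t3 : I t1 -> I t2 -> I t3 ->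
  I (k1 * t1 + k2 * t2 + k3 * t3).
Proof. by move=> h1 h2 h3; apply: memD; [apply: memD|]; apply: memM. Qed.

Lemma notin_l x y : ~ I (x * y) -> ~ I x.
Proof. by move=> h hx; apply: h; apply: memMr. Qed.
Lemma notin_r x y : ~ I (x * y) -> ~ I y.
Proof. by move=> h hy; apply: h; apply: memM. Qed.

Definition minv (b : R) : R :=
  epsilon (inhabits 0) (fun c => I (1 - b * c)).

Lemma minvP b : ~ I b -> I (1 - b * minv b).
Proof.
move=> hb; apply: (epsilon_spec (inhabits 0) (fun c => I (1 - b * c))).
pose J := fun x : R => exists r y, I y /\ x = r * b + y.
have hJ : is_ideal J.
  split.
  - by exists 0, 0; split; [exact: mem0| rewrite mul0r addr0].
  - move=> x y [r1 [y1 [h1 ->]]] [r2 [y2 [h2 ->]]].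
    exists (r1 + r2), (y1 + y2); split; first exact: memD.
    by ring.
  - move=> r x [r1 [y1 [h1 ->]]].
    exists (r * r1), (r * y1); split; first exact: memM.
    by ring.
have [J1|nJ1] := classic (J 1).
  case: J1 => r [y [hy e]]; exists r.
  by have -> : 1 - b * r = y by rewrite e; ring.
exfalso; apply: hb.
case: (proj2_sig m) => _ _ hmax.
apply: (hmax J hJ nJ1).
  by move=> x hx; exists 0, x; split => //; ring.
by exists 1, 0; split; [exact: mem0| ring].
Qed.

End Helpers.

Arguments nf {R}. Arguments df {R}. Arguments df_neq0 {R}. Arguments frac_nd {R}.
Arguments tofrac_inj {R}. Arguments memI {R m}. Arguments mem0 {R m}.
Arguments memD {R m}. Arguments memM {R m}. Arguments memMr {R m}.
Arguments memN {R m}. Arguments comb3 {R m}. Arguments notin_l {R m x y}.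
Arguments notin_r {R m x y}. Arguments minv {R}. Arguments minvP {R m}.

Definition phiF (R : idomainType) (x : {fraction R}) (m : Specm R) : R :=
  nf x * minv m (df x).

Theorem proposition1p1 (R : idomainType) (hJ : jacobson_trivial R) :
  is_filter (@Ffilter R) /\
  forall U : (Specm R -> Prop) -> Prop,
    is_ultrafilter U -> (forall Z, @Ffilter R Z -> U Z) ->
    (forall r s : R, uprod_eq U (canon r) (canon s) -> r = s) /\
    exists phi : {fraction R} -> Specm R -> R,
      uprod_embedding U phi /\
      forall r : R, uprod_eq U (phi (FracField.tofrac r)) (canon r).
Proof.
have nz_mul : forall x y : R, x <> 0 -> y <> 0 -> x * y <> 0.
  by move=> x y /eqP hx /eqP hy; apply/eqP; rewrite mulf_neq0.
split.
  split.
  - by exists 1; split => //; apply/eqP; exact: oner_neq0.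
  - move=> [r [rnz H]]; apply: rnz; apply: hJ => m.
    by apply: NNPP => hm; exact: (H m hm).
  - move=> A B [r [rnz HA]] [s [snz HB]]; exists (r * s); split.
      exact: nz_mul.
    move=> m hm; split; [apply: HA; exact: notin_l hm| apply: HB; exact: notin_r hm].
  - move=> A B [r [rnz HA]] HAB; exists r; split => // m hm.
    exact: HAB (HA m hm).
move=> U [[U1 U2 U3 U4] _] hF.
have large : forall (s : R) (A : Specm R -> Prop), s <> 0 ->
    (forall m, ~ proj1_sig m s -> A m) -> U A.
  by move=> s A hs h; apply: hF; exists s; split.
split.
  move=> r s H; apply: NNPP => hrs.
  have hne : r - s <> 0 by move/eqP; rewrite subr_eq0 => /eqP.
  have hA := large _ (fun m => ~ proj1_sig m (r - s)) hne (fun m h => h).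
  apply: U2; apply: U4 (U3 _ _ H hA) _.
  by move=> m [h1 h2]; apply: h2; exact: h1.
exists (@phiF R); split; last first.
  move=> r; rewrite /uprod_eq /canon /phiF.
  have Hr : nf (FracField.tofrac r) = r * df (FracField.tofrac r).
    by apply: tofrac_inj; rewrite frac_nd tofracM.
  apply: (large _ _ (df_neq0 (FracField.tofrac r))) => m hm.
  set a := nf _; set b := df _.
  have -> : a * minv m b - r = (a - r * b) * minv m b + (- r) * (1 - b * minv m b).
    by ring.
  rewrite /a Hr -/b subrr mul0r add0r; apply: memM; exact: minvP.
split.
- rewrite /uprod_eq /phiF.
  have H1 : nf (1 : {fraction R}) = df 1.
    by apply: tofrac_inj; rewrite frac_nd mul1r.
  apply: (large _ _ (df_neq0 1)) => m hm.
  rewrite H1.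
  have -> : df 1 * minv m (df 1) - 1 = - (1 - df 1 * minv m (df 1)) by ring.
  apply: memN; exact: minvP.
- move=> x y; rewrite /uprod_eq /phiF.
  set a := nf x; set b := df x; set c := nf y; set d := df y.
  set e := nf (x + y); set f := df (x + y).
  have Hadd : e * b * d = (a * d + c * b) * f.
    apply: tofrac_inj; rewrite !tofracM !tofracD !tofracM /a /c /e !frac_nd.
    by ring.
  apply: (large (b * d * f)); first by apply: (nz_mul); [apply: (nz_mul)|]; apply: df_neq0.
  move=> m hm.
  have hb : ~ proj1_sig m b by apply: notin_l (notin_l hm).
  have hd : ~ proj1_sig m d by apply: notin_r (notin_l hm).
  have hf : ~ proj1_sig m f by apply: notin_r hm.
  set ib := minv m b; set id := minv m d; set if' := minv m f.
  have -> : e * if' - (a * ib + c * id) =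
     (e * if' - e * if' * (1 - d * id) - c * id) * (1 - b * ib)
   + (e * if' - a * ib) * (1 - d * id)
   + (- ((a * d + c * b) * ib * id)) * (1 - f * if')
   + if' * ib * id * (e * b * d - (a * d + c * b) * f).
    by ring.
  rewrite Hadd subrr mulr0 addr0.
  by apply: comb3; apply: minvP.
- move=> x y; rewrite /uprod_eq /phiF.
  set a := nf x; set b := df x; set c := nf y; set d := df y.
  set e := nf (x * y); set f := df (x * y).
  have Hmul : e * b * d = (a * c) * f.
    apply: tofrac_inj; rewrite !tofracM /a /c /e !frac_nd.
    by ring.
  apply: (large (b * d * f)); first by apply: (nz_mul); [apply: (nz_mul)|]; apply: df_neq0.
  move=> m hm.
  have hb : ~ proj1_sig m b by apply: notin_l (notin_l hm).
  have hd : ~ proj1_sig m d by apply: notin_r (notin_l hm).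
  have hf : ~ proj1_sig m f by apply: notin_r hm.
  set ib := minv m b; set id := minv m d; set if' := minv m f.
  have -> : e * if' - (a * ib) * (c * id) =
     (e * if' - e * if' * (1 - d * id)) * (1 - b * ib)
   + (e * if') * (1 - d * id)
   + (- (a * c * ib * id)) * (1 - f * if')
   + if' * ib * id * (e * b * d - (a * c) * f).
    by ring.
  rewrite Hmul subrr mulr0 addr0.
  by apply: comb3; apply: minvP.
- move=> x y H.
  set a := nf x; set b := df x; set c := nf y; set d := df y.
  have hb0 := df_neq0 x; have hd0 := df_neq0 y.
  suff Had : a * d = c * b.
    have hBD : FracField.tofrac b * FracField.tofrac d != 0.
      by rewrite mulf_neq0 // tofrac_eq0; apply/eqP.
    apply: (mulIf hBD).
    have -> : x * (FracField.tofrac b * FracField.tofrac d) = FracField.tofrac (a * d).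
      by rewrite tofracM /a frac_nd; ring.
    have -> : y * (FracField.tofrac b * FracField.tofrac d) = FracField.tofrac (c * b).
      by rewrite tofracM /c frac_nd; ring.
    by rewrite Had.
  apply: NNPP => hW.
  have hW0 : a * d - c * b <> 0 by move/eqP; rewrite subr_eq0 => /eqP.
  have hA := large _ (fun m => ~ proj1_sig m ((a * d - c * b) * b * d))
    (nz_mul _ _ (nz_mul _ _ hW0 hb0) hd0) (fun m h => h).
  apply: U2; apply: U4 (U3 _ _ H hA) _.
  move=> m [h1 h2].
  have hb : ~ proj1_sig m b by apply: notin_r (notin_l h2).
  have hd : ~ proj1_sig m d by apply: notin_r h2.
  apply: h2.
  apply: memMr; apply: memMr.
  move: h1; rewrite /phiF -/a -/b -/c -/d => h1.
  set ib := minv m b; set id := minv m d.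
  have -> : a * d - c * b = (b * d) * (a * ib - c * id) + (a * d) * (1 - b * ib)
       + (- (c * b)) * (1 - d * id) by ring.
  by apply: comb3 => //; apply: minvP.
Qed.
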